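(* On $\overline{M_0}$ and on $\overline{M_{-1}}$ one has $\overline\delta\circ\overline{j^{aro}}=\overline{j^{aro}}\circ\overline\partial$.
   Context: Fix a finite set $C$ and a field of characteristic zero. Monomials $x^{\mathbf k}=\prod(x^a_j)^{k^a_j}$ in variables $x^a_j$ ($a\in C$, $j\ge-1$) have weight $\sum jk^a_j$, and $\mathbf k!=\prod k^a_j!$. $\overline{M_0}$ (resp. $\overline{M_{-1}}$) is a copy of the span of monomials of weight $\ge0$ (resp. $\ge-1$), the two copies being regarded as distinct. The transpose derivation is $\overline\partial x^{\mathbf k}=\sum_{j\ge0,a}k^a_jx^{\mathbf k-\mathbf e^a_j+\mathbf e^a_{j-1}}$ (acting within each copy). A tree (resp. aroma) is a finite connected directed graph with $C$-decorated vertices in which every vertex has exactly one outgoing edge except one root (resp. every vertex has exactly one outgoing edge). A tree or aroma with free edges assigns to each vertex $v$ a number $r_v\ge0$ of free edges; objects are up to isomorphism preserving decorations and the $r_v$; $\sigma(\tau)$ is the number of such automorphisms. $\overline\delta=\sum_v\overline\delta_v$ where $\overline\delta_v$ removes one free edge at $v$ (zero if $r_v=0$). With $f(v)$ the number of non-free edges ending at $v$, $\overline\Phi(\tau)=\prod_vx^{d(v)}_{f(v)+r_v-1}$. Define $\overline{j^{aro}}(x^{\kappa})=\sum_{a}\frac{\kappa!}{\sigma(a)}a$ for $x^\kappa\in\overline{M_0}$, summing over aromas with free edges with $\overline\Phi(a)=x^\kappa$, and $\overline{j^{aro}}(x^{\mathbf k})=\sum_t\frac{\mathbf k!}{\sigma(t)}t$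 for $x^{\mathbf k}\in\overline{M_{-1}}$, summing over trees with free edges with $\overline\Phi(t)=x^{\mathbf k}$ (empty sums are $0$), extended linearly. *)

(* Defs.v *)
From HB Require Import structures.
From mathcomp Require Import all_boot all_order all_algebra.
From mathcomp Require Import fingroup perm boolp.
Unset Printing Implicit Defensive.
Import Order.TTheory GRing.Theory Num.Theory.
Local Open Scope ring_scope.

Section Aromas.
Variable C : finType.

(* Monomials.  A variable x^a_j (a in C, j >= -1) is the pair (a, j).  *)
(* A monomial x^k is the multiset of its variables, represented by a  *)
(* list of variables taken up to permutation (compare with perm_eq).  *)
Definition var := (C * int)%type.
Definition monomial := seq var.

Definition valid_monomial (s : monomial) : bool := all (fun x => -1 <= x.2) s.

Definition weight (s : monomial) : int := \sum_(x <- s) x.2.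

(* k! = prod k^a_j ! *)
Definition mfact (s : monomial) : nat := (\prod_(x <- undup s) (count_mem x s)`!)%N.

Definition lower_at (s : monomial) (i : nat) : monomial :=
  [seq (if p.1 == i then (p.2.1, p.2.2 - 1) else p.2) | p <- zip (iota 0 (size s)) s].

Variable K : fieldType.

Definition poly := seq (K * monomial).

(* transpose derivation:  dbar x^k = sum_{j>=0,a} k^a_j x^{k - e^a_j + e^a_{j-1}}
   (summing over the positions of the list produces the multiplicity k^a_j) *)
Definition dbar (s : monomial) : poly :=
  [seq (1, lower_at s p.1) | p <- zip (iota 0 (size s)) s & 0 <= p.2.2].

(* Graphs with free edges.  Vertices are 'I_n; each vertex v carries  *)
(* its decoration d(v), its (unique) outgoing edge target (None = no  *)
(* outgoing edge) and its number r_v of free edges.                   *)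
Definition graph := {n : nat & {ffun 'I_n -> C * option 'I_n * nat}}.

Definition nv (G : graph) : nat := tag G.
Definition dec (G : graph) (v : 'I_(nv G)) : C := (tagged G v).1.1.
Definition succ (G : graph) (v : 'I_(nv G)) : option 'I_(nv G) := (tagged G v).1.2.
Definition fr (G : graph) (v : 'I_(nv G)) : nat := (tagged G v).2.

Definition iso (G H : graph) : Prop :=
  exists h : 'I_(nv G) -> 'I_(nv H), bijective h /\
    forall v, [/\ dec H (h v) = dec G v, succ H (h v) = omap h (succ G v)
                & fr H (h v) = fr G v].

Definition isaut (G : graph) (p : {perm 'I_(nv G)}) : bool :=
  [forall v, [&& dec G (p v) == dec G v, succ G (p v) == omap p (succ G v)
             & fr G (p v) == fr G v]].
Definition sigma (G : graph) : nat := #|[set p | isaut G p]|.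

Definition adj (G : graph) : rel 'I_(nv G) :=
  fun u w => (succ G u == Some w) || (succ G w == Some u).
Definition connected (G : graph) : bool :=
  [forall u, [forall w, connect (adj G) u w]].

Definition is_tree (G : graph) : bool :=
  (#|[set v | succ G v == None]| == 1)%N && connected G.
Definition is_aroma (G : graph) : bool :=
  [&& (0 < nv G)%N, [forall v, succ G v != None] & connected G].

Definition indeg (G : graph) (v : 'I_(nv G)) : nat := #|[set u | succ G u == Some v]|.

Definition Phi (G : graph) : monomial :=
  [seq (dec G v, (indeg G v + fr G v)%:Z - 1) | v <- enum 'I_(nv G)].

Definition remove_free (G : graph) (v : 'I_(nv G)) : graph :=
  existT _ (nv G) [ffun u => if u == v then (dec G u, succ G u, (fr G u).-1)
                             else tagged G u].

(* formal K-linear combinations of graphs; they denote elements of the free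
   K-vector space on isomorphism classes, via the coefficient function [coef] *)
Definition lincomb := seq (K * graph).
Definition coef (L : lincomb) (G : graph) : K :=
  \sum_(x <- L | `[< iso x.2 G >]) x.1.

Definition delta (G : graph) : seq graph :=
  [seq remove_free G v | v <- enum 'I_(nv G) & (0 < fr G v)%N].
Definition delta_lc (L : lincomb) : lincomb :=
  flatten [seq [seq (x.1, H) | H <- delta x.2] | x <- L].

Definition reps (l : seq graph) : seq graph :=
  foldr (fun G acc => if has (fun H => `[< iso G H >]) acc then acc else G :: acc)
        [::] l.

(* A finite list containing (up to iso) every graph G with Phi G = x^s:
   such G has size s vertices, and r_v <= j_v + 1 < bound s. *)
Definition bound (s : monomial) : nat := (\max_(x <- s) `|x.2|%N).+2.
Definition mkgraph n B (g : {ffun 'I_n -> C * option 'I_n * 'I_B}) : graph :=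
  existT _ n [ffun v => ((g v).1.1, (g v).1.2, val (g v).2)].
Definition cands (s : monomial) : seq graph :=
  [seq @mkgraph (size s) (bound s) g | g <- enum {ffun 'I_(size s) -> C * option 'I_(size s) * 'I_(bound s)}].

(* b = true : the copy Mbar_0 (aromas);  b = false : the copy Mbar_{-1} (trees) *)
Definition shape (b : bool) (G : graph) : bool := if b then is_aroma G else is_tree G.

Definition jaro (b : bool) (s : monomial) : lincomb :=
  [seq ((mfact s)%:R / (sigma G)%:R, G)
  | G <- reps [seq G <- cands s | shape b G && perm_eq (Phi G) s]].

Definition jaro_poly (b : bool) (P : poly) : lincomb :=
  flatten [seq [seq (p.1 * x.1, x.2) | x <- jaro b p.2] | p <- P].

End Aromas.

Arguments valid_monomial {C}.
Arguments weight {C}.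
Arguments mfact {C}.
Arguments dbar {C}.
Arguments nv {C}.
Arguments dec {C}.
Arguments succ {C}.
Arguments fr {C}.
Arguments iso {C}.
Arguments sigma {C}.
Arguments is_tree {C}.
Arguments is_aroma {C}.
Arguments indeg {C}.
Arguments Phi {C}.
Arguments remove_free {C}.
Arguments coef {C K}.
Arguments delta {C}.
Arguments delta_lc {C K}.
Arguments reps {C}.
Arguments cands {C}.
Arguments shape {C}.
Arguments jaro {C}.
Arguments jaro_poly {C K}.

(* Main.v *)
Require Import Defs.
From HB Require Import structures.
From mathcomp Require Import all_boot all_order all_algebra.
From mathcomp Require Import fingroup perm boolp.
From mathcomp Require Import zify ring.
Import Order.TTheory GRing.Theory Num.Theory.
Local Open Scope ring_scope.
Set Implicit Arguments. Unset Strict Implicit.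


Section Proof.
Variable C : finType.
Implicit Types G H : graph C.

Lemma iso_refl G : iso G G.
Proof.
exists id; split; first exact: (Bijective (fun _ => erefl) (fun _ => erefl)).
by move=> v; split => //; case: (succ G v).
Qed.

Lemma iso_sym G H : iso G H -> iso H G.
Proof.
case=> h [[k hk kh] P]; exists k; split; first exact: (Bijective kh hk).
move=> u; have := P (k u); rewrite kh => -[d s f]; split.
- by rewrite d.
- by rewrite s; case: (succ G (k u)) => //= x; rewrite hk.
- by rewrite f.
Qed.

Lemma iso_trans G H I : iso G H -> iso H I -> iso G I.
Proof.
case=> h1 [b1 P1] [h2 [b2 P2]]; exists (h2 \o h1); split; first exact: bij_comp.
move=> v; have [d1 s1 f1] := P1 v; have [d2 s2 f2] := P2 (h1 v); split => /=.
- by rewrite d2 d1.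
- by rewrite s2 s1; case: (succ G v).
- by rewrite f2 f1.
Qed.

Lemma iso_nv G H : iso G H -> nv G = nv H.
Proof. by case=> h [hb _]; have := bij_eq_card hb; rewrite !card_ord. Qed.

Definition gd n := {ffun 'I_n -> C * option 'I_n * nat}.
Definition Gr n (g : gd n) : graph C := existT _ n g.
Definition isom n (p : {perm 'I_n}) (g h : gd n) : bool :=
  [forall v, h (p v) == ((g v).1.1, omap p (g v).1.2, (g v).2)].

Lemma isoP n (g h : gd n) : iso (Gr g) (Gr h) <-> exists p, isom p g h.
Proof.
split.
- case=> f [fb P]; have fi := bij_inj fb; exists (perm fi).
  apply/forallP=> v; rewrite permE; case: (P v) => d s r.
  rewrite /dec /succ /fr /= in d s r.
  have -> : omap (perm fi) (g v).1.2 = omap f (g v).1.2.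
    by case: ((g v).1.2) => //= x; rewrite permE.
  by apply/eqP; move: d s r; case: (h (f v)) => [[a b] c] /= -> -> ->.
- case=> p /forallP P; exists p; split; first exact: (injF_bij (@perm_inj _ p)).
  by move=> v; have /eqP e := P v; rewrite /dec /succ /fr /= e.
Qed.

Lemma isautE n (g : gd n) p : @isaut C (Gr g) p = isom p g g.
Proof.
apply: eq_forallb => v; rewrite /dec /succ /fr /=.
by case: (g (p v)) => [[a b] c] /=; rewrite !xpair_eqE andbA.
Qed.

Lemma sigmaE n (g : gd n) : sigma (Gr g) = #|[set p | isom p g g]|.
Proof. by apply: eq_card => p; rewrite !inE isautE. Qed.

Lemma isomM n (p q : {perm 'I_n}) x y z : isom p x y -> isom q y z -> isom (p * q)%g x z.
Proof.
move=> /forallP P /forallP Q; apply/forallP => v; rewrite permM.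
rewrite (eqP (Q (p v))) (eqP (P v)) /=.
by case: ((x v).1.2) => //= a; rewrite permM.
Qed.

Lemma isomV n (p : {perm 'I_n}) x y : isom p x y -> isom (p^-1)%g y x.
Proof.
move=> /forallP P; apply/forallP => u; have /eqP := P ((p^-1)%g u); rewrite permKV => ->.
rewrite /=; case: (x ((p^-1)%g u)) => [[a b] c] /=; apply/eqP; congr (_, _, _).
by case: b => //= w; rewrite permK.
Qed.

Lemma isom1 n (x : gd n) : isom 1 x x.
Proof.
apply/forallP => v; rewrite perm1; case: (x v) => [[a b] c] /=.
by case: b => //= w; rewrite perm1.
Qed.

Lemma card_isom_r n (x y : gd n) q : isom q x y ->
  #|[set p | isom p x y]| = #|[set p | isom p x x]|.
Proof.
move=> Hq; rewrite -[RHS](card_rcoset _ q); apply: eq_card => p.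
rewrite mem_rcoset !inE; apply/idP/idP => H.
- exact: isomM H (isomV Hq).
- by rewrite -(mulgKV q p); exact: isomM H Hq.
Qed.

Lemma card_isom_l n (x y : gd n) q : isom q x y ->
  #|[set p | isom p x y]| = #|[set p | isom p y y]|.
Proof.
move=> Hq; rewrite -[RHS](card_lcoset _ q); apply: eq_card => p.
rewrite mem_lcoset !inE; apply/idP/idP => H.
- exact: isomM (isomV Hq) H.
- by rewrite -(mulKVg q p); exact: isomM Hq H.
Qed.


Definition rmf n (r : gd n) v : gd n :=
  [ffun u => if u == v then ((r u).1.1, (r u).1.2, (r u).2.-1) else r u].
Definition addf n (g : gd n) w : gd n :=
  [ffun u => if u == w then ((g u).1.1, (g u).1.2, (g u).2.+1) else g u].
Definition Aut n (x : gd n) := [set p | isom p x x].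

Lemma remove_freeE n (r : gd n) v : remove_free (Gr r) v = Gr (rmf r v).
Proof. by []. Qed.

Lemma rem_add n (p : {perm 'I_n}) (r g : gd n) v :
  (0 < (r v).2)%N && isom p (rmf r v) g = isom p r (addf g (p v)).
Proof.
apply/idP/idP.
- case/andP=> r0 /forallP P; apply/forallP=> u; rewrite ffunE (inj_eq perm_inj).
  have /eqP := P u; rewrite ffunE.
  case: eqP => [->|_] -> /=; last by [].
  by rewrite prednK.
- move=> /forallP P; have /eqP := P v; rewrite ffunE eqxx => Ev.
  apply/andP; split.
    by move: Ev; case: (g (p v)) => [[a b] c] [_ _ <-].
  apply/forallP => u; rewrite ffunE; have /eqP := P u.
  rewrite ffunE (inj_eq perm_inj); case: eqP => [->|_]; last by move=> -> /=.
  by move: (g (p v)) => [[a b] c] /= [-> -> <-].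
Qed.

Lemma card_set_sum (T : finType) (P : pred T) : #|[set x | P x]| = (\sum_x P x)%N.
Proof. by rewrite -sum1_card big_mkcond /=; apply: eq_bigr => x _; rewrite inE; case: (P x). Qed.

Lemma card_isomE n (x y : gd n) :
  #|[set p | isom p x y]| = (`[< iso (Gr x) (Gr y) >] * #|Aut x|)%N.
Proof.
case: asboolP => [/isoP [q Hq]|N]; first by rewrite mul1n (card_isom_r Hq).
rewrite mul0n; apply/eqP; rewrite cards_eq0; apply/eqP/setP => p; rewrite !inE.
by apply/negP => Hp; apply: N; apply/isoP; exists p.
Qed.

Lemma card_isomE' n (x y : gd n) :
  #|[set p | isom p x y]| = (`[< iso (Gr x) (Gr y) >] * #|Aut y|)%N.
Proof.
case: asboolP => [/isoP [q Hq]|N]; first by rewrite mul1n (card_isom_l Hq).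
rewrite mul0n; apply/eqP; rewrite cards_eq0; apply/eqP/setP => p; rewrite !inE.
by apply/negP => Hp; apply: N; apply/isoP; exists p.
Qed.

Lemma dcount n (r g : gd n) :
  ((\sum_v ((0 < (r v).2)%N && `[< iso (Gr (rmf r v)) (Gr g) >])) * #|Aut g|)%N =
  ((\sum_w `[< iso (Gr r) (Gr (addf g w)) >]) * #|Aut r|)%N.
Proof.
rewrite !big_distrl /=.
transitivity (\sum_v \sum_p ((0 < (r v).2)%N && isom p (rmf r v) g))%N.
  apply: eq_bigr => v _; case: (0 < (r v).2)%N => /=.
    by rewrite -card_set_sum [RHS]card_isomE'.
  by rewrite mul0n big1_eq.
transitivity (\sum_w \sum_p isom p r (addf g w))%N; last first.
  by apply: eq_bigr => w _; rewrite -card_set_sum [LHS]card_isomE.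
rewrite exchange_big [RHS]exchange_big /=; apply: eq_bigr => p _.
rewrite [RHS](reindex_inj (@perm_inj _ p)) /=; apply: eq_bigr => v _.
by rewrite rem_add.
Qed.


Lemma isom_succ n p (g h : gd n) u : isom p g h -> (h (p u)).1.2 = omap p (g u).1.2.
Proof. by move=> /forallP /(_ u) /eqP ->. Qed.

Lemma isom_dec n p (g h : gd n) u : isom p g h -> (h (p u)).1.1 = (g u).1.1.
Proof. by move=> /forallP /(_ u) /eqP ->. Qed.

Lemma isom_fr n p (g h : gd n) u : isom p g h -> (h (p u)).2 = (g u).2.
Proof. by move=> /forallP /(_ u) /eqP ->. Qed.

Lemma sum_reindex_perm n (p : {perm 'I_n}) (F : 'I_n -> nat) :
  (\sum_u F u = \sum_v F (p v))%N.
Proof. by rewrite (reindex_inj (@perm_inj _ p)). Qed.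

Lemma omap_perm_eq n (p : {perm 'I_n}) (o : option 'I_n) w :
  (omap p o == Some (p w)) = (o == Some w).
Proof. by case: o => //= a; rewrite !(inj_eq (@Some_inj _)) ?(inj_eq perm_inj). Qed.

Lemma omap_perm_None n (p : {perm 'I_n}) (o : option 'I_n) :
  (omap p o == None) = (o == None).
Proof. by case: o. Qed.

Lemma indeg_isom n p (g h : gd n) v : isom p g h ->
  indeg (Gr h) (p v) = indeg (Gr g) v.
Proof.
move=> I; rewrite /indeg !card_set_sum (sum_reindex_perm p); apply: eq_bigr => u _.
by rewrite /succ /= (isom_succ u I) omap_perm_eq.
Qed.

Lemma Phi_isom n p (g h : gd n) : isom p g h -> perm_eq (Phi (Gr h)) (Phi (Gr g)).
Proof.
move=> I; rewrite /Phi /=.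
have E : perm_eq (enum 'I_n) (map p (enum 'I_n)).
  apply: uniq_perm; first exact: enum_uniq.
    by rewrite (map_inj_uniq perm_inj) enum_uniq.
  move=> u; rewrite mem_enum; apply/esym.
  by rewrite -[u](permKV p) map_f // mem_enum.
apply: (perm_trans (perm_map _ E)); rewrite -map_comp.
erewrite eq_map; first exact: perm_refl.
move=> v /=; rewrite /dec /fr /=.
by rewrite (indeg_isom v I) (isom_dec v I) (isom_fr v I).
Qed.


Lemma connect_homo (T T' : finType) (e : rel T) (e' : rel T') (f : T -> T') :
  (forall x y, e x y -> e' (f x) (f y)) -> forall x y, connect e x y -> connect e' (f x) (f y).
Proof.
move=> H x y /connectP [q pq ->]; elim: q x pq => [|z q IH] x /=; first by rewrite connect0.
by case/andP => exz /IH; apply: connect_trans; exact: connect1 (H _ _ exz).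
Qed.

Lemma adj_isom n p (g h : gd n) u w : isom p g h ->
  @adj C (Gr h) (p u) (p w) = @adj C (Gr g) u w.
Proof. by move=> I; rewrite /adj /succ /= !(isom_succ _ I) !omap_perm_eq. Qed.

Lemma connected_isom1 n p (g h : gd n) : isom p g h ->
  @connected C (Gr g) -> @connected C (Gr h).
Proof.
move=> I /forallP Cg; apply/forallP => a; apply/forallP => b.
rewrite -[a](permKV p) -[b](permKV p).
apply: (connect_homo (e := @adj C (Gr g)) (f := p)).
  by move=> x y; rewrite (adj_isom _ _ I).
by have /forallP := Cg ((p^-1)%g a); apply.
Qed.

Lemma connected_isom n p (g h : gd n) : isom p g h ->
  @connected C (Gr h) = @connected C (Gr g).
Proof.
move=> I; apply/idP/idP; first exact: connected_isom1 (isomV I).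
exact: connected_isom1 I.
Qed.

Lemma shape_isom b n p (g h : gd n) : isom p g h -> Defs.shape b (Gr h) = Defs.shape b (Gr g).
Proof.
move=> I; rewrite /Defs.shape; case: b.
- rewrite /is_aroma /= (connected_isom I); congr (_ && (_ && _)).
  apply/forallP/forallP => H v.
  + by have := H (p v); rewrite /succ /= (isom_succ _ I) omap_perm_None.
  + by rewrite -(permKV p v) /succ /= (isom_succ _ I) omap_perm_None; apply: H.
- rewrite /is_tree (connected_isom I); congr (_ && _); congr (_ == _).
  rewrite !card_set_sum (sum_reindex_perm p); apply: eq_bigr => u _.
  by rewrite /succ /= (isom_succ _ I) omap_perm_None.
Qed.

Lemma iso_inv (R X : graph C) : iso R X ->
  [/\ sigma R = sigma X, forall b, Defs.shape b R = Defs.shape b X & perm_eq (Phi R) (Phi X)].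
Proof.
case: R X => [m r] [k x] I; have /= e := iso_nv I; subst k.
have [p P] := (isoP r x).1 I.
split.
- have := card_isomE r x; rewrite (card_isomE' r x) (asboolT I) !mul1n.
  by rewrite !sigmaE.
- by move=> b; rewrite (shape_isom b P).
- by rewrite perm_sym (Phi_isom P).
Qed.


Lemma reps_count (l : seq (graph C)) X :
  count (fun R => `[< iso R X >]) (reps l) = has (fun R => `[< iso R X >]) l.
Proof.
elim: l => [|G l IH] //=.
case: ifP => Hh.
- rewrite IH; case: asboolP => //= IG.
  case/hasP: Hh => H Hin /asboolP IGH.
  have : (0 < count (fun R => `[< iso R X >]) (reps l))%N.
    rewrite -has_count; apply/hasP; exists H => //; apply/asboolP.
    exact: iso_trans (iso_sym IGH) IG.
  by rewrite IH; case: has.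
- rewrite /= IH; case: asboolP => IG //=.
  case E: has => //=; exfalso.
  have : (0 < count (fun R => `[< iso R X >]) (reps l))%N by rewrite IH E.
  rewrite -has_count => /hasP [H Hin /asboolP IHX].
  move/negbT: Hh => /hasP; apply; exists H => //; apply/asboolP.
  exact: iso_trans IG (iso_sym IHX).
Qed.

Variable K : fieldType.

Lemma sum_const_count (I : Type) (r : seq I) (P : pred I) (c : K) :
  \sum_(i <- r | P i) c = c *+ count P r.
Proof.
elim: r => [|x r IH]; rewrite ?big_nil ?big_cons //= IH.
by case: (P x); rewrite /= ?add1n ?add0n ?mulrS.
Qed.

Lemma reps_sum (l : seq (graph C)) X (f : graph C -> K) :
  (forall R, iso R X -> f R = f X) ->
  \sum_(R <- reps l | `[< iso R X >]) f R =
    if has (fun R => `[< iso R X >]) l then f X else 0.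
Proof.
move=> Hf; rewrite (eq_bigr (fun _ => f X)); last by move=> R /asboolP; exact: Hf.
by rewrite sum_const_count reps_count; case: has.
Qed.


Lemma absz_pred k : (k <= `|(k%:Z - 1)%R|%N + 1)%N.
Proof. by case: k => [//|k]; rewrite -addn1 PoszD addrK absz_nat. Qed.

Lemma size_Phi (X : graph C) : size (Phi X) = nv X.
Proof. by rewrite /Phi size_map size_enum_ord. Qed.

Lemma has_cands b s (X : graph C) :
  has (fun R => `[< iso R X >]) [seq R <- cands s | Defs.shape b R && perm_eq (Phi R) s]
  = Defs.shape b X && perm_eq (Phi X) s.
Proof.
apply/idP/idP.
- case/hasP => R; rewrite mem_filter => /andP [/andP [Sh Ph] _] /asboolP I.
  have [_ Sb PP] := iso_inv I.
  by rewrite -Sb Sh /= (perm_trans _ Ph) // perm_sym.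
- case/andP => Sh Ph; apply/hasP.
  case: X Sh Ph => m x Sh Ph.
  have e : m = size s by rewrite -(perm_size Ph) size_Phi.
  subst m.
  have Hb : forall v, ((x v).2 < Defs.bound C s)%N.
    move=> v; rewrite /Defs.bound ltnS.
    set e := ((x v).1.1, ((indeg (Gr x) v + (x v).2)%:Z - 1)%R).
    have ein : e \in s by rewrite -(perm_mem Ph) /Phi; apply: (map_f (fun v => _)); rewrite mem_enum.
    have H1 : (`|e.2| <= \max_(y <- s) `|y.2|)%N.
      exact: (@leq_bigmax_seq _ s xpredT (fun y : var C => `|y.2|%N) e ein).
    apply: (@leq_trans (`|e.2| + 1)%N); last by rewrite addn1 ltnS.
    apply: leq_trans (absz_pred _); exact: leq_addl.
  pose gg : {ffun 'I_(size s) -> C * option 'I_(size s) * 'I_(Defs.bound C s)} :=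
    [ffun v => ((x v).1.1, (x v).1.2, inord (x v).2)].
  have E : @mkgraph C _ _ gg = existT _ (size s) x.
    rewrite /mkgraph; congr existT; apply/ffunP => v; rewrite !ffunE /= inordK.
      by case: (x v) => [[]].
    by apply: Hb.
  exists (@mkgraph C _ _ gg).
    rewrite mem_filter E Sh Ph /=.
    by rewrite /cands -E; apply: map_f; rewrite mem_enum.
  by rewrite E; apply/asboolP; exact: iso_refl.
Qed.

End Proof.


Section Lists.
Variable C : finType.
Implicit Types s l t : seq (var C).

Definition low (x : var C) : var C := (x.1, x.2 - 1).
Definition rais (x : var C) : var C := (x.1, x.2 + 1).
Lemma low_rais y : low (rais y) = y.
Proof. by case: y => a j; rewrite /low /rais /= addrK. Qed.
Lemma rais_low x : rais (low x) = x.
Proof. by case: x => a j; rewrite /low /rais /= subrK. Qed.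
Lemma low_neq x : (low x == x) = false.
Proof.
case: x => a j; rewrite /low xpair_eqE /= eqxx /=; apply/negbTE.
by rewrite -subr_eq0 addrAC subrr add0r oppr_eq0 oner_eq0.
Qed.

Lemma zip_iota_nth x0 s :
  zip (iota 0 (size s)) s = [seq (j, nth x0 s j) | j <- iota 0 (size s)].
Proof.
transitivity (zip (iota 0 (size s)) (mkseq (nth x0 s) (size s))); first by rewrite mkseq_nth.
by rewrite /mkseq; elim: (iota 0 (size s)) => //= j t ->.
Qed.

Lemma lower_atE x0 s i : (i < size s)%N ->
  lower_at C s i = set_nth x0 s i (low (nth x0 s i)).
Proof.
move=> Hi; rewrite /lower_at (zip_iota_nth x0) -map_comp.
apply: (@eq_from_nth _ x0).
  by rewrite size_map size_iota size_set_nth; apply/esym/maxn_idPr.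
move=> j; rewrite size_map size_iota => Hj.
rewrite (nth_map 0%N) ?size_iota // nth_iota // add0n nth_set_nth /=.
by case: eqP => // ->.
Qed.

Lemma count_nth_le x0 s i (a : pred (var C)) : (i < size s)%N ->
  (a (nth x0 s i) <= count a s)%N.
Proof.
move=> Hi; case E: (a (nth x0 s i)) => //; rewrite -has_count; apply/hasP.
by exists (nth x0 s i) => //; exact: mem_nth.
Qed.

Lemma count_lower x0 s i (a : pred (var C)) : (i < size s)%N ->
  (count a (lower_at C s i) + a (nth x0 s i) = count a s + a (low (nth x0 s i)))%N.
Proof.
move=> Hi; rewrite (lower_atE x0 Hi) count_set_nth_ltn //.
have := count_nth_le x0 a Hi; lia.
Qed.

Lemma count_L s x (a : pred (var C)) : x \in s ->
  (count a (low x :: rem x s) + a x = count a s + a (low x))%N.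
Proof.
move=> xs; rewrite [in RHS](seq.permP (perm_to_rem xs) a) /=.
ring.
Qed.

Lemma Q_lower x0 s l i : (i < size s)%N ->
  perm_eq l (lower_at C s i) = perm_eq (nth x0 s i :: l) (low (nth x0 s i) :: s).
Proof.
move=> Hi; apply/seq.permP/seq.permP => H a; have := count_lower x0 a Hi; have := H a; rewrite /=.
  by move=> -> E; rewrite addnC E addnC.
by move=> E E2; apply/eqP; rewrite -(eqn_add2r (a (nth x0 s i))) E2 addnC E addnC.
Qed.

Lemma mfact_perm t u : perm_eq t u -> mfact t = mfact u.
Proof.
move=> P; rewrite /mfact (perm_big _ (perm_undup (perm_mem P))).
by apply: eq_bigr => y _; rewrite (seq.permP P).
Qed.

Lemma mfactE t U : uniq U -> {subset t <= U} ->
  mfact t = (\prod_(y <- U) (count_mem y t)`!)%N.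
Proof.
move=> uU sub; rewrite /mfact [RHS](bigID (fun y => y \in t)) /=.
rewrite [X in (_ * X)%N]big1 ?muln1; last by move=> y /count_memPn ->.
rewrite -[RHS]big_filter; apply: perm_big; apply: uniq_perm; first exact: undup_uniq.
  exact: filter_uniq.
move=> y; rewrite mem_undup mem_filter; case E: (y \in t) => //=; by rewrite sub.
Qed.


Lemma mfact_step s x L : x \in s ->
  (forall a : pred (var C), count a L + a x = count a s + a (low x))%N ->
  (count_mem x s * mfact L = mfact s * (count_mem (low x) s).+1)%N.
Proof.
move=> xs HL.
have cL : forall y, (count_mem y L + (x == y) = count_mem y s + (low x == y))%N.
  by move=> y; exact: HL.
set U := undup (low x :: s).
have uU : uniq U by exact: undup_uniq.
have sS : {subset s <= U} by move=> y ys; rewrite mem_undup inE ys orbT.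
have lx : (low x == x) = false := low_neq x.
have sL : {subset L <= U}.
  move=> y yL; rewrite mem_undup inE; case: eqP => //= ny.
  apply/negPn/negP => ys; have := cL y; move/count_memPn: ys => ->.
  have -> : (low x == y) = false by apply/eqP => E; apply: ny.
  have : (0 < count_mem y L)%N by rewrite -has_count has_pred1.
  case: (count_mem y L) => //.
rewrite (mfactE uU sL) (mfactE uU sS).
have xU : x \in U by apply: sS.
have lU : low x \in U by rewrite mem_undup inE eqxx.
have lU' : low x \in rem x U by rewrite (mem_rem_uniq _ uU) inE lx lU.
rewrite (big_rem _ xU) [in RHS](big_rem _ xU) /=.
rewrite (big_rem _ lU') [in RHS](big_rem _ lU') /=.
rewrite [X in (_ * (_ * (_ * X)))%N](eq_big_seq (fun y => (count_mem y s)`!)); last first.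
  move=> y; rewrite (mem_rem_uniq _ (rem_uniq _ uU)) inE => /andP [ny1].
  rewrite (mem_rem_uniq _ uU) inE => /andP [ny2 _].
  have := cL y; rewrite eq_sym (negbTE ny2) eq_sym (negbTE ny1) !addn0 => ->.
  by [].
have ex : count_mem x s = (count_mem x L).+1.
  by have := cL x; rewrite eqxx lx addn0 addn1 => <-.
have el : count_mem (low x) L = (count_mem (low x) s).+1.
  by have := cL (low x); rewrite eq_sym lx eqxx addn0 addn1.
rewrite ex el !factS; ring.
Qed.


Lemma sum_uniq_eq (A B : seq (var C)) (phi : var C -> nat) : uniq A -> uniq B ->
  (forall x, phi x != 0%N -> (x \in A) = (x \in B)) ->
  (\sum_(x <- A) phi x = \sum_(x <- B) phi x)%N.
Proof.
move=> uA uB H.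
have E : forall D : seq (var C),
    (\sum_(x <- D) phi x = \sum_(x <- [seq x <- D | phi x != 0%N]) phi x)%N.
  move=> D; rewrite big_filter [LHS](bigID (fun x => phi x != 0%N)) /=.
  by rewrite [X in (_ + X)%N]big1 ?addn0 // => x /negPn /eqP.
rewrite (E A) (E B); apply: perm_big; apply: uniq_perm; try exact: filter_uniq.
by move=> x; rewrite !mem_filter; case E': (phi x != 0%N) => //=; apply: H; rewrite E'.
Qed.

Lemma iterop_addn n c : iterop n addn c 0%N = (c * n)%N.
Proof.
elim: n => [|n IH]; first by rewrite muln0.
by rewrite mulnS -IH; case: n {IH} => [|n] /=; rewrite ?addn0.
Qed.

Lemma R4 (x0 : var C) s l : all (fun y : var C => -1 <= y.2) l ->
  (\sum_(p <- zip (iota 0 (size s)) s | (0 <= p.2.2)%R)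
      perm_eq l (lower_at C s p.1) * mfact (lower_at C s p.1))%N
  = (mfact s * \sum_(y <- l) perm_eq (rais y :: l) (y :: s))%N.
Proof.
move=> Hl.
set Q := fun x => perm_eq (x :: l) (low x :: s).
set T := fun x => (Q x * mfact (low x :: rem x s))%N.
transitivity (\sum_(x <- s | (0 <= x.2)%R) T x)%N.
  rewrite (zip_iota_nth x0) big_map -[in RHS](mkseq_nth x0 s) /mkseq big_map.
  rewrite big_seq_cond [in RHS]big_seq_cond; apply: eq_big => [j //|j /andP [+ _]].
  rewrite mem_iota add0n => /andP [_ Hj]; cbn [fst snd].
  have Pm : perm_eq (lower_at C s j) (low (nth x0 s j) :: rem (nth x0 s j) s).
    apply/seq.permP => a; apply/eqP; rewrite -(eqn_add2r (a (nth x0 s j))).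
    by rewrite (count_lower x0 a Hj) (count_L a (mem_nth x0 Hj)).
  by rewrite /T /Q (Q_lower x0 _ Hj) (mfact_perm Pm).
transitivity (\sum_(x <- undup s | (0 <= x.2)%R) count_mem x s * T x)%N.
  by rewrite -big_undup_iterop_count; apply: eq_bigr => x _; rewrite iterop_addn mulnC.
transitivity (mfact s * \sum_(x <- undup s | (0 <= x.2)%R) Q x * count_mem (low x) l)%N.
  rewrite big_distrr /= big_seq_cond [in RHS]big_seq_cond; apply: eq_bigr => x /andP [+ _].
  rewrite mem_undup => xs.
  rewrite /T; case Qx: (Q x); last by rewrite !mul0n !muln0.
  rewrite !mul1n (mfact_step xs (fun a => count_L a xs)); congr (_ * _)%N.
  move/seq.permP: Qx => /(_ (pred1 (low x))) /=.
  by rewrite eq_sym low_neq eqxx add0n add1n => ->.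
congr (_ * _)%N.
transitivity (\sum_(x <- map rais (undup l)) Q x * count_mem (low x) l)%N; last first.
  rewrite big_map -[in RHS]big_undup_iterop_count; apply: eq_bigr => y _.
  by rewrite iterop_addn /Q !low_rais mulnC.
rewrite -big_filter; apply: sum_uniq_eq.
- by rewrite filter_uniq // undup_uniq.
- by rewrite (map_inj_uniq (can_inj low_rais)) undup_uniq.
move=> x; rewrite mem_filter mem_undup.
rewrite -[x in x \in map _ _]rais_low (mem_map (can_inj low_rais)) mem_undup.
case Qx: (Q x) => //=; rewrite mul1n -lt0n -has_count has_pred1 => lxl.
rewrite lxl; apply/andP; split.
  by have := allP Hl _ lxl; rewrite /low /= lerBrDr addNr.
move/seq.permP: Qx => /(_ (pred1 x)) /=; rewrite eqxx low_neq add0n add1n.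
by move=> E; rewrite -has_pred1 has_count -E.
Qed.

End Lists.


Section G.
Variable C : finType.

Definition Fe n (g : gd C n) (v : 'I_n) : var C :=
  ((g v).1.1, (indeg (Gr g) v + (g v).2)%:Z - 1).

Lemma PhiE n (g : gd C n) : Phi (Gr g) = [seq Fe g v | v <- enum 'I_n].
Proof. by []. Qed.

Lemma count_map_enum n (F : 'I_n -> var C) (a : pred (var C)) :
  count a [seq F v | v <- enum 'I_n] = (\sum_v a (F v))%N.
Proof.
rewrite count_map -sum1_count big_mkcond big_enum /=.
by apply: eq_bigr => v _; case: (a (F v)).
Qed.

Lemma indeg_add n (g : gd C n) w v : indeg (Gr (addf g w)) v = indeg (Gr g) v.
Proof.
rewrite /indeg /succ /=; apply: eq_card => u; rewrite !inE ffunE.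
by case: (u == w).
Qed.

Lemma Fe_add n (g : gd C n) w v :
  Fe (addf g w) v = if v == w then rais (Fe g v) else Fe g v.
Proof.
rewrite /Fe indeg_add ffunE; case: (v == w) => //=.
by rewrite /rais /= -addn1 addnA PoszD addrAC.
Qed.

Lemma count_Phi_add n (g : gd C n) w (a : pred (var C)) :
  (count a (Phi (Gr (addf g w))) + a (Fe g w) =
   count a (Phi (Gr g)) + a (rais (Fe g w)))%N.
Proof.
rewrite !PhiE !count_map_enum (bigD1 w) //= [in RHS](bigD1 w) //= Fe_add eqxx.
rewrite (eq_bigr (fun v => (a (Fe g v) : nat))); last by move=> v /negbTE vw; rewrite Fe_add vw.
ring.
Qed.

Lemma perm_Phi_add n (g : gd C n) w s :
  perm_eq (Phi (Gr (addf g w))) s =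
  perm_eq (rais (Fe g w) :: Phi (Gr g)) (Fe g w :: s).
Proof.
apply/seq.permP/seq.permP => H a; have := count_Phi_add g w a; have := H a; rewrite /=.
  by move=> <- E; rewrite addnC -E addnC.
move=> E E2; apply/eqP; rewrite -(eqn_add2r (a (Fe g w))) E2 addnC E addnC.
by [].
Qed.

Lemma sum_Phi_add n (g : gd C n) s :
  (\sum_w perm_eq (Phi (Gr (addf g w))) s =
   \sum_(y <- Phi (Gr g)) perm_eq (rais y :: Phi (Gr g)) (y :: s))%N.
Proof.
rewrite [in RHS]PhiE big_map big_enum /=; apply: eq_bigr => w _.
by rewrite perm_Phi_add.
Qed.

Lemma Phi_ge n (g : gd C n) : all (fun y : var C => -1 <= y.2) (Phi (Gr g)).
Proof.
rewrite PhiE; apply/allP => y /mapP [v _ ->] /=.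
by rewrite lerBrDr addNr.
Qed.

End G.


Section H.
Variable C : finType.

Lemma R4' (s l : seq (var C)) : all (fun y : var C => -1 <= y.2) l ->
  (\sum_(p <- zip (iota 0 (size s)) s | (0 <= p.2.2)%R)
      perm_eq l (lower_at C s p.1) * mfact (lower_at C s p.1))%N
  = (mfact s * \sum_(y <- l) perm_eq (rais y :: l) (y :: s))%N.
Proof.
case: s => [|x0 s'] Hl; last exact: R4.
rewrite big_nil big1_seq ?muln0 // => y /andP [_ yl].
case P: (perm_eq _ _) => //; move/perm_size: P => /= [E].
by case: l Hl yl E.
Qed.

Lemma sum_bool_count (T : Type) (r : seq T) (P : pred T) :
  (\sum_(x <- r) (P x : nat))%N = count P r.
Proof. by elim: r => [|x r IH]; rewrite ?big_nil ?big_cons ?IH. Qed.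

Lemma count_map_filter_enum n (T : Type) (f : 'I_n -> T) (Q : pred 'I_n) (a : pred T) :
  count a [seq f v | v <- enum 'I_n & Q v] = (\sum_v (Q v && a (f v)))%N.
Proof.
rewrite count_map count_filter -sum1_count big_mkcond big_enum /=.
by apply: eq_bigr => v _; rewrite /predI /preim /= andbC; case: (Q v && a (f v)).
Qed.

Lemma sigma_gt0 (R : graph C) : (0 < sigma R)%N.
Proof.
rewrite card_gt0; apply/set0Pn; exists 1%g; rewrite inE; apply/forallP => v.
rewrite perm1 !eqxx /= andbT; by case: (succ R v) => //= u; rewrite perm1.
Qed.

Lemma shape_succ b n (g h : gd C n) : (forall u, (h u).1.2 = (g u).1.2) ->
  Defs.shape b (Gr h) = Defs.shape b (Gr g).
Proof.
move=> E.
have Ea : @adj C (Gr h) =2 @adj C (Gr g) by move=> x y; rewrite /adj /succ /= !E.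
have Ec : @connected C (Gr h) = @connected C (Gr g).
  rewrite /connected; apply: eq_forallb => x; apply: eq_forallb => y; by rewrite (eq_connect Ea).
case: b; rewrite /Defs.shape.
- rewrite /is_aroma Ec; congr (_ && (_ && _)); apply: eq_forallb => v.
  by rewrite /succ /= E.
- rewrite /is_tree Ec; congr (_ && _); congr (_ == _); apply: eq_card => v.
  by rewrite !inE /succ /= E.
Qed.

Lemma shape_add b n (g : gd C n) w : Defs.shape b (Gr (addf g w)) = Defs.shape b (Gr g).
Proof. by apply: shape_succ => u; rewrite ffunE; case: (u == w). Qed.

Definition Mc n (g : gd C n) (R : graph C) : nat := (\sum_w `[< iso R (Gr (addf g w)) >])%N.

Lemma dcount_gen n (g : gd C n) (R : graph C) :
  (count (fun H => `[< iso H (Gr g) >]) (delta R) * sigma (Gr g) = Mc g R * sigma R)%N.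
Proof.
case: R => m r; case: (eqVneq m n) => [e|ne].
- subst m; rewrite /delta /Mc count_map_filter_enum !sigmaE.
  exact: dcount.
- have -> : count (fun H => `[< iso H (Gr g) >]) (delta (existT _ m r)) = 0%N.
    apply/eqP; rewrite -leqn0 leqNgt -has_count; apply/hasP => -[H /mapP [v _ ->] /asboolP I].
    by move: (iso_nv I) => /= E; rewrite E eqxx in ne.
  have -> : Mc g (existT _ m r) = 0%N.
    rewrite /Mc big1 // => w _; case: asboolP => // I.
    by move: (iso_nv I) => /= E; rewrite E eqxx in ne.
  by [].
Qed.

End H.


Section M.
Variable C : finType.
Variable K : fieldType.

Lemma coef_delta (L : lincomb C K) (X : graph C) :
  coef (delta_lc L) X = \sum_(x <- L) x.1 * (count (fun H => `[< iso H X >]) (delta x.2))%:R.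
Proof.
rewrite /coef /delta_lc big_flatten big_map; apply: eq_bigr => x _.
by rewrite big_map sum_const_count mulr_natr.
Qed.

Lemma coef_jaro_poly b (P : Defs.poly C K) (X : graph C) :
  coef (jaro_poly b P) X = \sum_(p <- P) p.1 * coef (jaro K b p.2) X.
Proof.
rewrite /coef /jaro_poly big_flatten big_map; apply: eq_bigr => p _.
by rewrite big_map mulr_sumr.
Qed.

Lemma coef_jaro b t (X : graph C) :
  coef (jaro K b t) X =
  if Defs.shape b X && perm_eq (Phi X) t then (mfact t)%:R / (sigma X)%:R else 0.
Proof.
rewrite /coef /jaro big_map.
rewrite (@reps_sum C K _ X (fun R => (mfact t)%:R / (sigma R)%:R)).
  by rewrite has_cands.
by move=> R I; have [-> _ _] := iso_inv I.
Qed.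

End M.

Unset Implicit Arguments.

Theorem corollary4p9 (C : finType) (K : fieldType) (hK : [pchar K] =i pred0)
  (b : bool) (s : monomial C) (hs : valid_monomial s)
  (hw : (if b then 0 else -1) <= weight s) (G : graph C) :
  coef (delta_lc (jaro K b s)) G = coef (jaro_poly b (dbar K s)) G.
Proof.
have nz : forall m, (0 < m)%N -> (m%:R : K) != 0.
  by move=> m m0; rewrite ((pcharf0P K).1 hK) -lt0n.
case: G => n g.
have sG := nz _ (sigma_gt0 (Gr g)).
rewrite coef_delta coef_jaro_poly.
transitivity (((mfact s)%:R : K) / (sigma (Gr g))%:R *
   ((\sum_w (Defs.shape b (Gr g) && perm_eq (Phi (Gr (addf g w))) s))%N)%:R).
  rewrite /jaro big_map.
  transitivity (\sum_(R <- reps [seq R <- cands s | Defs.shape b R && perm_eq (Phi R) s])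
     ((mfact s)%:R : K) / (sigma (Gr g))%:R * (Mc g R)%:R).
    apply: eq_bigr => R _.
    have E := dcount_gen g R.
    have sR := nz _ (sigma_gt0 R).
    have E' : ((count (fun H => `[< iso H (Gr g) >]) (delta R))%:R : K) =
       (Mc g R)%:R * (sigma R)%:R / (sigma (Gr g))%:R.
      by rewrite -natrM -E natrM mulfK.
    rewrite /= E'; field.
    by rewrite sR sG.
  rewrite -mulr_sumr -natr_sum; congr (_ * _%:R).
  rewrite /Mc exchange_big /=; apply: eq_bigr => w _.
  rewrite (sum_bool_count _ (fun R => `[< iso R (Gr (addf g w)) >])) reps_count has_cands.
  by rewrite shape_add.
rewrite /dbar big_map big_filter.
transitivity (\sum_(p <- zip (iota 0 (size s)) s | (0 <= p.2.2)%R)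
   ((Defs.shape b (Gr g) && perm_eq (Phi (Gr g)) (lower_at C s p.1)) *
      mfact (lower_at C s p.1))%N%:R / ((sigma (Gr g))%:R : K)); last first.
  apply: eq_bigr => p _; rewrite coef_jaro mul1r.
  by case: ifP => _; rewrite ?mul1n ?mul0n ?mul0r.
rewrite -mulr_suml -natr_sum.
case: (Defs.shape b (Gr g)).
- rewrite (R4' s (Phi_ge g)) -sum_Phi_add natrM; field.
  by rewrite sG.
- rewrite !big1 ?mulr0 ?mul0r // => p _.
Qed.
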